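(* Let $G$ be a connected graph. Then $\mathrm{id}^{\leq 3}(G)\leq \left\lceil\frac{|E(G)|+\tau_3(G)}{2}\right\rceil$.
   Context: All graphs are finite and simple. A triangle-transversal of $G$ is a set $F$ of edges such that $G\setminus F$ contains no triangle; $\tau_3(G)$ is the minimum size of a triangle-transversal. For an oriented graph $D$ and $X\subseteq V(D)$, the inversion of $X$ reverses every arc with both endvertices in $X$; a $(\leq p)$-inversion is the inversion of a set of at most $p$ vertices. $\mathrm{id}^{\leq p}(G)$ is the maximum, over all ordered pairs $(\vec G_1,\vec G_2)$ of orientations of $G$, of the minimum number of $(\leq p)$-inversions transforming $\vec G_1$ into $\vec G_2$. *)

(* Defs.v *)
From mathcomp Require Import all_boot.
Set Implicit Arguments. Unset Strict Implicit. Unset Printing Implicit Defensive.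

Section Defs.
Variable T : finType.

Definition simple_graph (e : rel T) : Prop := symmetric e /\ irreflexive e.
Definition connected_graph (e : rel T) : Prop := forall x y : T, connect e x y.

Definition edges (e : rel T) : {set {set T}} :=
  [set [set a.1; a.2] | a : T * T & e a.1 a.2].

Definition triangle_transversal (e : rel T) (F : {set {set T}}) : bool :=
  [forall x : T, forall y : T, forall z : T,
     ~~ [&& e x y, e y z, e x z,
            [set x; y] \notin F, [set y; z] \notin F & [set x; z] \notin F]].

(* tau_3(G): minimum size of a triangle-transversal F subset of E(G)
   (E(G) itself is one, so #|E(G)| is a valid neutral element). *)
Definition tau3 (e : rel T) : nat :=
  \big[minn/#|edges e|]_(F : {set {set T}} |
       (F \subset edges e) && triangle_transversal e F) #|F|.

(* An orientation of G as its set of arcs (x,y), meaning x -> y. *)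
Definition orientation (e : rel T) (A : {set T * T}) : Prop :=
  (forall x y : T, (x, y) \in A -> e x y) /\
  (forall x y : T, e x y -> ((x, y) \in A) != ((y, x) \in A)).

Definition invert (X : {set T}) (A : {set T * T}) : {set T * T} :=
  [set a : T * T | if (a.1 \in X) && (a.2 \in X) then (a.2, a.1) \in A
                   else a \in A].

Definition apply_inversions (Xs : seq {set T}) (A : {set T * T}) :=
  foldl (fun B X => invert X B) A Xs.

Definition inv_reachable (p k : nat) (A1 A2 : {set T * T}) : Prop :=
  exists Xs : seq {set T},
    [/\ size Xs <= k, all (fun X : {set T} => #|X| <= p) Xs & apply_inversions Xs A1 = A2].

(* id^{<= p}(G) <= k : for every ordered pair of orientations, the minimum
   number of (<= p)-inversions transforming one into the other is <= k. *)
Definition id_le (e : rel T) (p k : nat) : Prop :=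
  forall A1 A2 : {set T * T}, orientation e A1 -> orientation e A2 ->
    inv_reachable p k A1 A2.

End Defs.

(* Main.v *)
Require Import Defs.
From mathcomp Require Import all_boot.
From mathcomp Require Import zify.
Set Implicit Arguments. Unset Strict Implicit. Unset Printing Implicit Defensive.

Section W.
Variable T : finType.

Definition cnt (Xs : seq {set T}) (a b : T) : nat :=
  count (fun X : {set T} => (a \in X) && (b \in X)) Xs.

Lemma cnt_cat Xs Ys a b : cnt (Xs ++ Ys) a b = cnt Xs a b + cnt Ys a b.
Proof. by rewrite /cnt count_cat. Qed.

Lemma cnt_sym Xs a b : cnt Xs a b = cnt Xs b a.
Proof. by apply: eq_count => X; rewrite andbC. Qed.

Lemma apply_invE Xs A a b :
  ((a, b) \in apply_inversions Xs A) =
  if odd (cnt Xs a b) then (b, a) \in A else (a, b) \in A.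
Proof.
elim: Xs A => [|X Xs IH] A //=.
rewrite IH /invert !inE /= /cnt /= -/(cnt Xs a b).
rewrite oddD.
by case: (a \in X); case: (b \in X); case: (odd (cnt Xs a b)).
Qed.

Variable h : rel T.
Hypothesis hsym : symmetric h.
Hypothesis hirr : irreflexive h.
Hypothesis htri : forall x y z, h x y -> h y z -> h x z -> False.

Definition mv (d : T -> T -> bool) (v : T) (k : seq T) : {set T} :=
  v |: [set c | (c \in k) && d v c].

Fixpoint star (d : T -> T -> bool) (v : T) (s : seq T) : seq {set T} :=
  match s with
  | a :: b :: s' => mv d v [:: a; b] :: star d v s'
  | [:: a] => [:: mv d v [:: a]]
  | [::] => [::]
  end.

Lemma star_size d v s : size (star d v s) = (size s).+1 %/ 2.
Proof.
move: {2}(size s) (leqnn (size s)) => n; elim: n s => [|n IH] [|a [|b s]] //=.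
move=> Hs; rewrite IH; last by move: Hs => /=; lia.
rewrite -[(size s).+3]addn2 divnDr ?dvdnn // divnn; lia.
Qed.

Lemma mv_card d v k : size k <= 2 -> #|mv d v k| <= 3.
Proof.
move=> Hk; rewrite /mv cardsU1.
have : #|[set c | (c \in k) && d v c]| <= 2.
  apply: leq_trans Hk; apply: (leq_trans _ (card_size k)).
  by apply: subset_leq_card; apply/subsetP => c; rewrite inE => /andP[].
case: (v \in _) => /=; lia.
Qed.

Lemma star_card d v s : all (fun X : {set T} => #|X| <= 3) (star d v s).
Proof.
move: {2}(size s) (leqnn (size s)) => n; elim: n s => [|n IH] [|a [|b s]] //=;
  move=> Hs; rewrite mv_card //= ?IH //; by move: Hs => /=; lia.
Qed.

Lemma mv_mem d v k x y : h x y -> {in k, forall c, h v c} ->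
  (x \in mv d v k) && (y \in mv d v k) =
  ((x == v) && (y \in k) && d v y) || ((y == v) && (x \in k) && d v x).
Proof.
move=> hxy hk; rewrite /mv !in_setU1 !inE.
have xy : x != y by apply: contraTneq hxy => ->; rewrite hirr.
case: (x =P v) => [xv|xv] /=.
  have yx : (y == x) = false by rewrite eq_sym (negbTE xy).
  by rewrite -xv yx /= orbF.
case: (y == v) => /=; first by rewrite andbT.
case xk: (x \in k) => //=; case yk: (y \in k) => //=; rewrite ?andbF //.
case: (d v x) => /=; last by [].
case: (d v y) => //.
exfalso; apply: (htri (x:=x) (y:=v) (z:=y)) => //; [rewrite hsym|]; exact: hk.
Qed.

Lemma bool_aux (P Q yk ys xk xs dy dx : bool) :
  ~~ (P && Q) -> ~~ (yk && ys) -> ~~ (xk && xs) ->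
  (P && yk && dy || Q && xk && dx) + (P && ys && dy || Q && xs && dx) =
  (P && (yk || ys) && dy || Q && (xk || xs) && dx).
Proof. by case: P Q yk ys xk xs dy dx => [] [] [] [] [] [] [] []. Qed.

Lemma star_cnt d v s x y : uniq s -> {in s, forall c, h v c} -> h x y ->
  cnt (star d v s) x y =
  (((x == v) && (y \in s) && d v y) || ((y == v) && (x \in s) && d v x)).
Proof.
move=> us hs hxy.
have xy : x != y by apply: contraTneq hxy => ->; rewrite hirr.
have PQ : ~~ ((x == v) && (y == v)).
  by apply/negP => /andP[/eqP xv /eqP yv]; move: xy; rewrite xv yv eqxx.
move: {2}(size s) (leqnn (size s)) => n.
elim: n s us hs => [|n IH] [|a [|b s]] //= us hs Hs;
  rewrite /cnt /= -?/(cnt _ x y) ?in_nil ?andbF ?addn0 //.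
- by rewrite mv_mem.
rewrite mv_mem //; last first.
  by move=> c cin; apply: hs; move: cin; rewrite !inE => /orP[]->; rewrite ?orbT.
move: us => /and3P [ua ub us].
rewrite IH //; last 2 first.
- by move=> c cs; apply: hs; rewrite !inE cs !orbT.
- by move: Hs; rewrite ltnS => /ltnW.
rewrite -[a :: b :: s]/([:: a; b] ++ s) !mem_cat.
have dis c : ~~ ((c \in [:: a; b]) && (c \in s)).
  apply/negP => /andP []; rewrite !inE => /orP [] /eqP -> cs.
  + by move: ua; rewrite inE cs orbT.
  + by move: ub; rewrite cs.
by apply: bool_aux.
Qed.

Lemma edgeP (u : rel T) E :
  reflect (exists a b, u a b /\ E = [set a; b]) (E \in edges u).
Proof.
apply: (iffP imsetP) => [[[a b]] /=|[a [b [uab ->]]]].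
  by rewrite inE /= => uab ->; exists a, b.
by exists (a, b); rewrite ?inE.
Qed.

Lemma set2C (a b : T) : [set a; b] = [set b; a].
Proof. by rewrite setUC. Qed.

Lemma set2_inj (a b c : T) : a != c -> a != b -> [set a; b] = [set a; c] -> b = c.
Proof.
move=> ac ab E; have : c \in [set a; b] by rewrite E !inE eqxx orbT.
by rewrite !inE eq_sym (negbTE ac) => /eqP.
Qed.

Definition rmv (u : rel T) v : rel T := [rel a b | u a b && (a != v) && (b != v)].

Lemma edges_split (u : rel T) v : symmetric u -> irreflexive u ->
  #|edges u| = #|edges (rmv u v)| + #|[set a | u v a]|.
Proof.
move=> us ui.
have -> : edges u = edges (rmv u v) :|: [set [set v; a] | a in [set a | u v a]].
  apply/setP => E; rewrite in_setU; apply/edgeP/orP.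
  - move=> [a [b [uab ->]]].
    case: (a =P v) => [av|av].
      by right; apply/imsetP; exists b; rewrite ?inE -?av.
    case: (b =P v) => [bv|bv].
      by right; apply/imsetP; exists a; rewrite ?inE -?bv 1?us // set2C.
    by left; apply/edgeP; exists a, b; split => //; rewrite /rmv /= uab; apply/andP; split; apply/eqP.
  - case=> [/edgeP [a [b [/= /andP [/andP [uab _] _] ->]]]|/imsetP [a]]; first by exists a, b.
    by rewrite inE => uva ->; exists v, a.
rewrite cardsU.
have -> : edges (rmv u v) :&: [set [set v; a] | a in [set a | u v a]] = set0.
  apply/setP => E; rewrite !inE; apply/negP => /andP [/edgeP [a [b [/= /andP [/andP [_ av] bv] ->]]]].
  case/imsetP => c _ Eq.
  have : v \in [set a; b] by rewrite Eq !inE eqxx.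
  by rewrite !inE !(eq_sym v) (negbTE av) (negbTE bv).
rewrite cards0 subn0; congr (_ + _); apply: card_in_imset.
move=> a b; rewrite !inE => ua ub; apply: set2_inj.
  by apply: contraTneq ub => <-; rewrite ui.
by apply: contraTneq ua => <-; rewrite ui.
Qed.

Lemma eq_edges (u w : rel T) : u =2 w -> edges u = edges w.
Proof.
move=> uw; apply/setP => E; apply/edgeP/edgeP => -[a [b [uab ->]]]; exists a, b;
  split => //; first [by rewrite -uw | by rewrite uw].
Qed.

Lemma edges0 (u : rel T) : (forall a b, ~~ u a b) -> #|edges u| = 0.
Proof.
move=> u0; apply/eqP; rewrite cards_eq0; apply/eqP/setP => E; rewrite inE.
by apply/edgeP => -[a [b [uab _]]]; move: (u0 a b); rewrite uab.
Qed.

Fixpoint good (s : seq T) : bool :=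
  match s with
  | [::] => true
  | v :: s' => ((s' == [::]) || has (h v) s') && good s'
  end.

Lemma arith (n m y : nat) (o : bool) : (o -> odd n) -> (~~ o -> ~~ odd n \/ m = 0) ->
  y <= (m + o).+1 %/ 2 -> (n - o).+1 %/ 2 + y <= (m + n).+1 %/ 2.
Proof.
have := odd_double_half n; rewrite -mul2n.
move: (n./2) => k; case: (odd n) => /= <-; case: o => //= H1 H2;
  first [lia | (case: (H2 isT) => // ->; lia) | by case: (H1 isT)].
Qed.

Lemma kotzig (d : T -> T -> bool) (dsym : forall a b, d a b = d b a) s :
  uniq s -> good s -> forall u : rel T, symmetric u -> (forall a b, u a b -> h a b) ->
  (forall a b, a \in s -> b \in s -> h a b -> u a b) ->
  (forall a b, u a b -> (a \in s) || (b \in s)) ->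
  exists Ys : seq {set T}, [/\ size Ys <= (#|edges u|).+1 %/ 2,
     all (fun X : {set T} => #|X| <= 3) Ys &
     forall a b, h a b -> odd (cnt Ys a b) = u a b && d a b].
Proof.
elim: s => [|v s IH] /=.
  move=> _ _ u _ _ _ uin; exists [::]; split => // a b _.
  by case uab: (u a b) => //; move: (uin a b uab); rewrite !in_nil.
move=> /andP [vs us] /andP [gv gs] u usym uh uin uout.
have uirr : irreflexive u by move=> a; apply/negP => /uh; rewrite hirr.
set N := [set a | u v a].
set oc := odd #|N| && has (h v) s.
have [p Hp] : exists p, oc -> h v p && (p \in s).
  case: (boolP oc) => [/andP [_ /hasP [p ps hvp]]|_]; last by exists v.
  by exists p; rewrite hvp ps.
have uvp : oc -> u v p.
  move=> o; move/(_ o): Hp => /andP [hvp ps]; apply: uin => //.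
  - by rewrite inE eqxx.
  - by rewrite inE ps orbT.
have pv : oc -> p != v.
  by move=> o; apply: contraTneq (uvp o) => ->; rewrite uirr.
set N' := if oc then N :\ p else N.
have memN' y : (y \in N') = u v y && ~~ (oc && (y == p)).
  rewrite /N'; case: ifP => o; last by rewrite inE andbT.
  by rewrite !inE andbC.
have cardN' : #|N'| = #|N| - oc.
  rewrite /N'; case: ifP => o; last by rewrite subn0.
  by rewrite (cardsD1 p N) inE uvp ?o //= add1n subn1.
set u' : rel T := [rel a b | rmv u v a b ||
   oc && (((a == v) && (b == p)) || ((a == p) && (b == v)))].
have u'sym : symmetric u'.
  move=> a b; rewrite /u' /rmv /= usym; congr (_ || _).
    by rewrite -!andbA; congr (_ && _); rewrite andbC.
  by rewrite orbC (andbC (b == v)) (andbC (b == p)).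
have u'h a b : u' a b -> h a b.
  rewrite /u' /rmv /= => /orP [/andP [/andP [/uh //]]|/andP [o /orP [] /andP [/eqP -> /eqP ->]]].
    by move/(_ o): Hp => /andP [].
  by rewrite hsym; move/(_ o): Hp => /andP [].
have u'irr : irreflexive u' by move=> a; apply/negP => /u'h; rewrite hirr.
have cardE' : #|edges u'| = #|edges (rmv u v)| + oc.
  rewrite (edges_split v u'sym u'irr); congr (_ + _).
    rewrite (@eq_edges (rmv u' v) (rmv u v)) // => a b; rewrite /u' /rmv /=.
    case: (a =P v) => [->|av]; first by rewrite !andbF.
    case: (b =P v) => [->|bv]; first by rewrite andbF /= !andbF.
    by rewrite /= ?andbT ?andbF ?orbF.
  case: (boolP oc) => o.
    have -> : [set a | u' v a] = [set p]; last by rewrite cards1.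
    apply/setP => a; rewrite !inE /u' /rmv /= eqxx /= andbF /= o.
    by rewrite (eq_sym v p) (negbTE (pv o)) /= orbF.
  apply: eq_card0 => a; rewrite !inE /u' /rmv /= eqxx /= (negbTE o).
  by rewrite andbF.
have cardEu : #|edges u| = #|edges (rmv u v)| + #|N|.
  by rewrite (edges_split v usym uirr).
have [Ys' [sz' c3' par']] : exists Ys' : seq {set T},
  [/\ size Ys' <= (#|edges u'|).+1 %/ 2,
     all (fun X : {set T} => #|X| <= 3) Ys' &
     forall a b, h a b -> odd (cnt Ys' a b) = u' a b && d a b].
  apply: IH => //.
  - move=> a b ain bin hab; rewrite /u' /rmv /= uin ?inE ?ain ?bin ?orbT //=.
    apply/orP; left; apply/andP; split; apply: contraNneq vs => <- //.
  - move=> a b; rewrite /u' /rmv /= => /orP [/andP [/andP [uab av] bv]|].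
      by move: (uout a b uab); rewrite !inE (negbTE av) (negbTE bv).
    move=> /andP [o /orP [] /andP [/eqP -> /eqP ->]];
      by move/(_ o): Hp => /andP [_ ps]; rewrite ps ?orbT.
have m0 : s = [::] -> #|edges (rmv u v)| = 0.
  move=> s0; apply: edges0 => a b; rewrite /rmv /=.
  apply/negP => /andP [/andP [uab av] bv].
  by move: (uout a b uab); rewrite s0 !inE (negbTE av) (negbTE bv).
exists (star d v (enum N') ++ Ys'); split.
- rewrite size_cat star_size -cardE cardEu cardN'.
  move: sz'; rewrite cardE'; apply: arith.
    by rewrite /oc => /andP [].
  move=> no; case: (s =P [::]) => [s0|s0]; first by right; apply: m0.
  left; move: no gv; rewrite /oc; case: (odd #|N|) => //= nh /orP [/eqP //|hh].
  by rewrite hh in nh.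
- by rewrite all_cat star_card c3'.
- move=> x y hxy.
  rewrite cnt_cat oddD star_cnt ?enum_uniq //; last first.
    by move=> c; rewrite mem_enum memN' => /andP [/uh].
  rewrite par' // !mem_enum !memN' /u' /rmv /=.
  have xy : x != y by apply: contraTneq hxy => ->; rewrite hirr.
  case: (x =P v) => [xv|xv].
    have yv : (y == v) = false by apply/negbTE; rewrite -xv eq_sym.
    rewrite xv ?eqxx yv /= oddb !andbF /= orbF.
    rewrite orbF; case E: (oc && (y == p)) => /=; last by rewrite andbT addbF.
    have uvy : u v y by move/andP: E => [o /eqP ->]; exact: uvp.
    by rewrite uvy andbF.
  have xv' : (x == v) = false by apply/eqP.
  case: (y =P v) => [yv|yv].
    rewrite yv ?eqxx ?xv' /= oddb !andbF /= (usym x v) (dsym x v) !andbT.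
    case E: (oc && (x == p)) => /=; last by rewrite andbT addbF.
    have uvx : u v x by move/andP: E => [o /eqP ->]; exact: uvp.
    by rewrite uvx andbF.
  by rewrite /= ?andbF ?orbF ?andbT.
Qed.

Lemma cross (s : seq T) a y : connect h a y -> a \in s -> y \notin s ->
  exists b c, [/\ b \in s, c \notin s & h b c].
Proof.
move=> /connectP [p pp ->]; elim: p a pp => [|z p IH] a /= pp ain; first by rewrite ain.
move/andP: pp => [haz pp].
case: (boolP (z \in s)) => zs; first exact: IH.
by move=> _; exists a, z.
Qed.

Lemma good_exists : (forall x y, connect h x y) ->
  exists s, [/\ uniq s, good s & forall x, x \in s].
Proof.
move=> hc.
suff H : forall n (s : seq T), #|T| - size s <= n -> uniq s -> good s ->
  exists s', [/\ uniq s', good s' & forall x, x \in s'].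
  by apply: (H #|T| [::]) => //; rewrite subn0.
elim=> [|n IH] s Hn us gs.
  exists s; split => // x; apply/negPn/negP => xs.
  have : size (x :: s) <= #|T| by rewrite -(card_uniqP _) ?max_card //= xs.
  by move: Hn => /=; lia.
case: (boolP [forall x, x \in s]) => [/forallP all|]; first by exists s.
move=> /forallPn [y ys].
have [c [cs gc]] : exists c, c \notin s /\ good (c :: s).
  case: s ys Hn us gs => [|a s] ys Hn us gs; first by exists y.
  have [b [c [bin cn hbc]]] := cross (hc a y) (mem_head a s) ys.
  exists c; split => //; rewrite -[good (c :: a :: s)]/(((a :: s == [::]) || has (h c) (a :: s)) && good (a :: s)) gs andbT.
  by apply/hasP; exists b => //; rewrite hsym.
apply: (IH (c :: s)) => //=; last by rewrite cs.
have : size (c :: s) <= #|T| by rewrite -(card_uniqP _) ?max_card //= cs.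
by move: Hn => /=; lia.
Qed.

End W.

Section M.
Variable T : finType.

Lemma set2_cases (a b c c' : T) : a != b -> [set a; b] = [set c; c'] ->
  (c = a /\ c' = b) \/ (c = b /\ c' = a).
Proof.
move=> ab E.
have : c \in [set a; b] by rewrite E !inE eqxx.
have : c' \in [set a; b] by rewrite E !inE eqxx orbT.
have : a \in [set c; c'] by rewrite -E !inE eqxx.
have : b \in [set c; c'] by rewrite -E !inE eqxx orbT.
rewrite !inE.
case: (c =P a) => [ca|ca]; case: (c =P b) => [cb|cb] //=.
- by move: ab; rewrite -ca -cb eqxx.
- move=> /orP [/eqP bc|/eqP bc'] _; first by move: cb; rewrite bc.
  by left; split.
- move=> _ /orP [/eqP ac|/eqP ac']; first by move: ca; rewrite ac.
  by right; split.
Qed.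

Variable e : rel T.
Hypothesis esym : symmetric e.
Hypothesis eirr : irreflexive e.
Hypothesis econ : connected_graph e.
Variable F : {set {set T}}.
Hypothesis Fsub : F \subset edges e.
Hypothesis Ftr : triangle_transversal e F.
Hypothesis Fmin : forall F' : {set {set T}}, (F' \subset edges e) && triangle_transversal e F' -> #|F| <= #|F'|.

Definition hh : rel T := [rel x y | e x y && ([set x; y] \notin F)].

Lemma hh_sym : symmetric hh.
Proof. by move=> x y; rewrite /hh /= esym set2C. Qed.

Lemma hh_irr : irreflexive hh.
Proof. by move=> x; rewrite /hh /= eirr. Qed.

Lemma hh_tri x y z : hh x y -> hh y z -> hh x z -> False.
Proof.
rewrite /hh /= => /andP [exy nxy] /andP [eyz nyz] /andP [exz nxz].
move/forallP: Ftr => /(_ x) /forallP /(_ y) /forallP /(_ z).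
by rewrite exy eyz exz nxy nyz nxz.
Qed.

Lemma tri_case x y a b c : e a b -> e b c -> e a c -> [set a; b] = [set x; y] ->
  [set b; c] \notin F :\ [set x; y] -> [set a; c] \notin F :\ [set x; y] ->
  e x y -> connect hh x y.
Proof.
move=> eab ebc eac E nbc nac exy.
have ab : a != b by apply: contraTneq eab => ->; rewrite eirr.
have cab : c \notin [set a; b].
  by rewrite !inE; apply/norP; split; apply/negP => /eqP ca;
    [move: eac | move: ebc]; rewrite ca eirr.
have nbc' : [set b; c] \notin F.
  move: nbc; rewrite in_setD1 negb_and negbK => /orP [/eqP bcE|] //.
  by move: cab; rewrite E -bcE !inE eqxx orbT.
have nac' : [set a; c] \notin F.
  move: nac; rewrite in_setD1 negb_and negbK => /orP [/eqP acE|] //.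
  by move: cab; rewrite E -acE !inE eqxx orbT.
have cab' : connect hh a b.
  apply: (connect_trans (y := c)); apply: connect1; rewrite /hh /= ?eac ?nac' //.
  by rewrite esym ebc set2C nbc'.
have [[-> ->]|[-> ->]] := set2_cases ab E => //.
by rewrite (sym_connect_sym hh_sym).
Qed.

Lemma hh_conn : forall x y, connect hh x y.
Proof.
move=> x y; apply: (connect_sub (e := e)); last exact: econ.
move=> {}x {}y exy; case: (boolP ([set x; y] \in F)) => xyF; last first.
  by apply: connect1; rewrite /hh /= exy xyF.
set F1 := F :\ [set x; y].
have : ~~ triangle_transversal e F1.
  apply/negP => tr.
  have := Fmin (F' := F1); rewrite tr andbT.
  have -> : F1 \subset edges e by apply: subset_trans Fsub; apply: subD1set.
  move=> /(_ isT); rewrite (cardsD1 [set x; y] F) xyF.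
  by rewrite add1n ltnn.
move=> /forallPn [a /forallPn [b /forallPn [c /negPn]]].
move=> /andP [eab /andP [ebc /andP [eac /andP [nab /andP [nbc nac]]]]].
move/forallP: Ftr => /(_ a) /forallP /(_ b) /forallP /(_ c).
rewrite eab ebc eac /= => H.
have inF1 E : E \notin F1 -> E \in F -> E = [set x; y].
  by move=> nE EF; move: nE; rewrite in_setD1 EF andbT negbK => /eqP.
case: (boolP ([set a; b] \in F)) => abF.
  by apply: (tri_case (a := a) (b := b) (c := c)) => //; apply: inF1.
case: (boolP ([set b; c] \in F)) => bcF.
  by apply: (tri_case (a := b) (b := c) (c := a)) => //;
    first [by rewrite esym | by apply: inF1 | by rewrite set2C].
case: (boolP ([set a; c] \in F)) => acF.
  by apply: (tri_case (a := a) (b := c) (c := b)) => //;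
    first [by rewrite esym | by apply: inF1 | by rewrite set2C].
by move: H; rewrite abF bcF acF.
Qed.

Lemma edges_hh : edges hh = edges e :\: F.
Proof.
apply/setP => E; rewrite in_setD; apply/edgeP/andP.
  by move=> [a [b [/andP [eab nF] ->]]]; split => //; apply/edgeP; exists a, b.
move=> [nF /edgeP [a [b [eab Eab]]]]; exists a, b; split => //.
by rewrite /hh /= eab -Eab.
Qed.

Lemma cnt_F (Fz : {set {set T}}) a b : Fz \subset F -> e a b ->
  cnt (enum Fz) a b = ([set a; b] \in Fz).
Proof.
move=> FzF eab.
have ab : a != b by apply: contraTneq eab => ->; rewrite eirr.
rewrite /cnt -mem_enum -(count_uniq_mem _ (enum_uniq _)).
apply: eq_in_count => X; rewrite mem_enum => XF /=.
have /edgeP [c [c' [ecc ->]]] : X \in edges e by apply: (subsetP Fsub); apply: (subsetP FzF).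
apply/andP/eqP => [[ain bin]|E]; last by split; rewrite E !inE eqxx ?orbT.
apply/eqP; rewrite eq_sym eqEcard (cards2 a b) ab; apply/andP; split.
  by apply/subsetP => z /set2P [] ->.
by rewrite cards2; case: (c != c').
Qed.

Lemma assemble (A1 A2 : {set T * T}) : orientation e A1 -> orientation e A2 ->
  exists Xs : seq {set T}, [/\ size Xs <= (#|edges e| - #|F|).+1 %/ 2 + #|F|,
    all (fun X : {set T} => #|X| <= 3) Xs & apply_inversions Xs A1 = A2].
Proof.
move=> [o1 o1'] [o2 o2'].
set d := fun a b => ((a, b) \in A1) != ((a, b) \in A2).
have nA (A : {set T * T}) a b : (forall x y, (x, y) \in A -> e x y) -> ~~ e a b -> ((a, b) \in A) = false.
  by move=> oA nab; apply/negP => /oA; rewrite (negbTE nab).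
have flip (A : {set T * T}) a b : (forall x y, e x y -> ((x, y) \in A) != ((y, x) \in A)) -> e a b ->
    ((b, a) \in A) = ~~ ((a, b) \in A).
  by move=> oA eab; move: (oA a b eab); case: ((a, b) \in A); case: ((b, a) \in A).
have dsym a b : d a b = d b a.
  rewrite /d; case: (boolP (e a b)) => eab.
    by rewrite (flip _ _ _ o1' eab) (flip _ _ _ o2' eab); case: ((a, b) \in A1); case: ((a, b) \in A2).
  have eba : ~~ e b a by rewrite esym.
  by rewrite !(nA _ _ _ o1) ?(nA _ _ _ o2).
have [s [us gs alls]] := good_exists hh_sym hh_conn.
have [Ys [szY c3Y parY]] := kotzig hh_sym hh_irr hh_tri dsym us gs hh_sym (fun a b h => h)
  (fun a b _ _ h => h) (fun a b _ => introT orP (or_introl (alls a))).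
set Fz := [set f in F | [exists p : T * T,
   (f == [set p.1; p.2]) && (d p.1 p.2 != odd (cnt Ys p.1 p.2))]].
have FzF : Fz \subset F by apply/subsetP => f; rewrite inE => /andP [].
exists (Ys ++ enum Fz); split.
- rewrite size_cat -cardE.
  have := subset_leq_card FzF.
  move: szY; rewrite edges_hh cardsDS //.
  move: (#|F|) (#|Fz|) (#|edges e|) (size Ys) => f z m y; lia.
- rewrite all_cat c3Y /=; apply/allP => X; rewrite mem_enum => /(subsetP FzF) /(subsetP Fsub).
  by case/edgeP => [a [b [_ ->]]]; rewrite cards2; case: (a != b).
apply/setP => [[a b]]; rewrite apply_invE.
case: (boolP (e a b)) => eab; last first.
  by rewrite !(nA _ _ _ o1) ?(nA _ _ _ o2) ?if_same // esym.
suff -> : odd (cnt (Ys ++ enum Fz) a b) = d a b.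
  rewrite (flip _ _ _ o1' eab) /d.
  by case: ((a, b) \in A1); case: ((a, b) \in A2).
rewrite cnt_cat oddD (cnt_F FzF eab) oddb inE.
case: (boolP ([set a; b] \in F)) => abF /=; last first.
  by rewrite parY /hh /= ?eab ?abF // addbF.
have ab : a != b by apply: contraTneq eab => ->; rewrite eirr.
have -> : [exists p : T * T, ([set a; b] == [set p.1; p.2]) && (d p.1 p.2 != odd (cnt Ys p.1 p.2))]
   = (d a b != odd (cnt Ys a b)).
  apply/existsP/idP => [[[p q] /= /andP [/eqP E]]|dab].
    have [[-> ->]|[-> ->]] := set2_cases ab E => //.
    by rewrite dsym cnt_sym.
  by exists (a, b); rewrite /= eqxx dab.
by case: (odd _); case: (d a b).
Qed.

End M.

Theorem mainTheorem8 (T : finType) (e : rel T) :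
  simple_graph e -> connected_graph e ->
  id_le e 3 ((#|edges e| + tau3 e).+1 %/ 2).
Proof.
move=> [esym eirr] econ A1 A2 oA1 oA2.
have Pe : (edges e \subset edges e) && triangle_transversal e (edges e).
  rewrite subxx /=; apply/forallP => x; apply/forallP => y; apply/forallP => z.
  apply/negP => /andP [exy /andP [_ /andP [_ /andP [nF _]]]].
  by move: nF; apply/negP/negPn/edgeP; exists x, y.
case: (@arg_minnP _ (edges e) (fun F : {set {set T}} => (F \subset edges e) && triangle_transversal e F) (fun F : {set {set T}} => #|F|) Pe) => F PF Fmin.
move/andP: PF => [Fsub Ftr].
have Ftau : #|F| <= tau3 e.
  rewrite /tau3; apply: (big_ind (fun n => #|F| <= n)).
  - exact: Fmin.
  - by move=> m n Hm Hn; rewrite leq_min Hm Hn.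
  - by move=> G PG; apply: Fmin.
have [Xs [sz c3 ap]] := assemble esym eirr econ Fsub Ftr Fmin oA1 oA2.
exists Xs; split => //.
apply: leq_trans sz _; have := subset_leq_card Fsub.
move: (#|F|) (#|edges e|) (tau3 e) Ftau => f m t; lia.
Qed.
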